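(* Let $G$ be a non-trivial abelian group (written additively) and $\varphi$ an automorphism of $G$. Let $G_\varphi$ be the set $G$ with the operation $g\rhd h=\varphi(g)+(\mathrm{id}-\varphi)(h)$. Then the following are equivalent: (i) $G_\varphi$ is finitely stable; (ii) $\varphi$ is a torsion element of the automorphism group $Aut(G)$.
   Context: For a rack $X$ and $u_1,\ldots,u_n\in X$, write $x\rhd(u_i)_{i=1}^n:=(\cdots((x\rhd u_1)\rhd u_2)\cdots)\rhd u_n$. A stabilizing family of order $n$ is a family $(u_1,\ldots,u_n)$ of elements of $X$ with $x\rhd(u_i)_{i=1}^n=x$ for all $x\in X$; $X$ is finitely stable if it has a stabilizing family of some order $n\ge 1$. *)

(* Defs.v *)
From mathcomp Require Import all_boot all_algebra.
Set Implicit Arguments. Unset Strict Implicit. Unset Printing Implicit Defensive.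
Import GRing.Theory.
Local Open Scope ring_scope.

Definition rack_iter (X : Type) (op : X -> X -> X) (x : X) (u : seq X) : X :=
  foldl op x u.

Definition stabilizing_family (X : Type) (op : X -> X -> X) (n : nat) (u : seq X) :=
  size u = n /\ forall x : X, rack_iter op x u = x.

Definition finitely_stable (X : Type) (op : X -> X -> X) :=
  exists n : nat, (1 <= n)%N /\ exists u : seq X, stabilizing_family op n u.

Definition Gphi_op (G : zmodType) (phi : G -> G) (g h : G) : G :=
  phi g + (h - phi h).

(* Main.v *)
Require Import Defs.
From mathcomp Require Import all_boot all_algebra.
Import GRing.Theory.
Local Open Scope ring_scope.

Lemma phiB (G : zmodType) (phi : G -> G) (phi_add : {morph phi : x y / x + y}) x y :
  phi (x - y) = phi x - phi y.
Proof.
have h0 : phi 0 = 0.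
  have e := phi_add 0 0; rewrite addr0 in e.
  by apply: (addrI (phi 0)); rewrite addr0 -e.
have hN : forall z, phi (- z) = - phi z.
  move=> z; apply: (addrI (phi z)); by rewrite -phi_add !subrr h0.
by rewrite phi_add hN.
Qed.

Lemma iter_diff (G : zmodType) (phi : G -> G) (phi_add : {morph phi : x y / x + y}) u :
  forall x y, foldl (Gphi_op phi) x u - foldl (Gphi_op phi) y u = iter (size u) phi (x - y).
Proof.
elim: u => [|h u IH] x y //=.
rewrite IH -iterS iterSr; congr iter.
rewrite (@phiB _ phi phi_add x y) /Gphi_op.
by rewrite opprD addrACA subrr addr0.
Qed.

Theorem mainTheorem6 (G : zmodType) (phi : G -> G)
    (G_nontrivial : exists g : G, g != 0)
    (phi_add : {morph phi : x y / x + y})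
    (phi_bij : bijective phi) :
  finitely_stable (Gphi_op phi) <->
  exists k : nat, (1 <= k)%N /\ (forall x : G, iter k phi x = x).
Proof.
split.
  move=> [n [n1 [u [su st]]]]; exists n; split => // x.
  have := @iter_diff _ phi phi_add u x 0.
  by rewrite /rack_iter in st; rewrite !st subr0 su => <-.
move=> [k [k1 hk]]; exists k; split => //; exists (nseq k 0); split.
  by rewrite size_nseq.
move=> x; rewrite /rack_iter.
have := @iter_diff _ phi phi_add (nseq k 0) x 0.
have -> : foldl (Gphi_op phi) 0 (nseq k 0) = 0.
  elim: k {k1 hk} => //= k IH.
  by rewrite {2}/Gphi_op sub0r subrr IH.
by rewrite !subr0 size_nseq hk.
Qed.
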